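(* Let $n,m$ be positive integers and $\mathbf{r}=(r_1,\dots,r_m)$, $\mathbf{s}=(s_1,\dots,s_m)$ sequences of nonnegative integers with sums $r$ and $s$. Then $|\mathrm{SB}^-(n,\mathbf{r},\mathbf{s})| = |\mathrm{SP}(n,r,s,m)|$.
   Context: Selberg permutations: let $A(n,r,s,m)$ be the set of distinct letters $x_i$ ($1\le i\le n$), $a_{ij}^{(k)}$ ($1\le i<j\le n$, $1\le k\le m$), $b_i^{(k)}$ ($1\le i\le n$, $1\le k\le r$), $c_i^{(k)}$ ($1\le i\le n$, $1\le k\le s$). $\mathrm{SP}(n,r,s,m)$ is the set of permutations (linear orderings) of $A(n,r,s,m)$ in which $x_1,\dots,x_n$ appear in this order, each $a_{ij}^{(k)}$ lies between $x_i$ and $x_j$, each $b_i^{(k)}$ lies before $x_i$, and each $c_i^{(k)}$ lies after $x_i$. Books: for nonnegative integers $p,q$, the $(n,p,q)^-$-staircase is the set of cells $(i,j)$ (row $i$, column $j$) with $1\le i\le p+n$, $1\le j\le n+q$, $i\le j+p$, excluding those with $i\le p$ and $j>n$; the cell $(j+p,j)$ ($1\le j\le n$) is its $j$th diagonal cell (so row $i>p$ contains the diagonal cell $(i,i-p)$, column $j\le n$ contains $(j+p,j)$, and other rows/columns contain none). Let page $i$ be the $(n,r_i,s_i)^-$-staircase, $1\le i\le m$, and identify the $j$th diagonal cells of all pages for each $j$. An $(n,\mathbf{r},\mathbf{s})^-$-Selberg book is a filling of the resulting cells with $1,\dots,(r+s+1)n+m\binom n2$, each used once, such that in each page every non-diagonal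 cell has entry larger than that of the diagonal cell in its row (if any) and smaller than that of the diagonal cell in its column (if any). $\mathrm{SB}^-(n,\mathbf{r},\mathbf{s})$ is the set of these. *)

(* Defs.v *)
From mathcomp Require Import all_boot.
Set Implicit Arguments. Unset Strict Implicit. Unset Printing Implicit Defensive.

(* Indices are 0-based ordinals: x_i ~ i : 'I_n, a_{ij}^{(k)} ~ ((i,j),k) with i<j,
   b_i^{(k)} ~ (i,k) : 'I_n * 'I_r, c_i^{(k)} ~ (i,k) : 'I_n * 'I_s. *)
Definition pairs (n : nat) := {p : 'I_n * 'I_n | p.1 < p.2}.

Definition Letter (n r s m : nat) : finType :=
  (('I_n + (pairs n * 'I_m)) + (('I_n * 'I_r) + ('I_n * 'I_s)))%type.

Section SPdef.
Variables n r s m : nat.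
Definition lx (i : 'I_n) : Letter n r s m := inl (inl i).
Definition la (p : pairs n) (k : 'I_m) : Letter n r s m := inl (inr (p, k)).
Definition lb (i : 'I_n) (k : 'I_r) : Letter n r s m := inr (inl (i, k)).
Definition lc (i : 'I_n) (k : 'I_s) : Letter n r s m := inr (inr (i, k)).

(* A linear ordering of A(n,r,s,m) is a bijection pos : A -> {0,..,|A|-1}
   (pos u = position of letter u). *)
Definition is_SP (pos : {ffun Letter n r s m -> 'I_#|Letter n r s m|}) : bool :=
  [&& injectiveb pos,
      [forall i : 'I_n, forall j : 'I_n, (i < j) ==> (pos (lx i) < pos (lx j))],
      [forall p : pairs n, forall k : 'I_m,
          (pos (lx (val p).1) < pos (la p k)) && (pos (la p k) < pos (lx (val p).2))],
      [forall i : 'I_n, forall k : 'I_r, pos (lb i k) < pos (lx i)] &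
      [forall i : 'I_n, forall k : 'I_s, pos (lx i) < pos (lc i k)]].

Definition SP : {set {ffun Letter n r s m -> 'I_#|Letter n r s m|}} :=
  [set pos | is_SP pos].
End SPdef.

Section SBdef.
Variables (n m : nat) (rv sv : 'I_m -> nat).

Definition rtot := \sum_(i < m) rv i.
Definition stot := \sum_(i < m) sv i.

(* coordinates are 1-based naturals stored in ordinals of a bound large enough *)
Definition Bnd := n + rtot + stot + 1.

(* cell (row,col) of the (n,p,q)^- staircase *)
Definition in_stair (p q row col : nat) : bool :=
  [&& 1 <= row <= p + n, 1 <= col <= n + q, row <= col + p &
      ~~ ((row <= p) && (n < col))].

Definition is_diag (p row col : nat) : bool := (row == col + p) && (1 <= col <= n).

(* non-diagonal cells of page i : ((i,row),col) *)
Definition page_ok (c : 'I_m * 'I_Bnd * 'I_Bnd) : bool :=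
  in_stair (rv c.1.1) (sv c.1.1) c.1.2 c.2 && ~~ is_diag (rv c.1.1) c.1.2 c.2.

Definition PageCell := {c : 'I_m * 'I_Bnd * 'I_Bnd | page_ok c}.

(* cells of the book: the n shared (identified) diagonal cells, the j-th
   diagonal cell being  inl (j-1), plus the non-diagonal cells of all pages *)
Definition Cell : finType := ('I_n + PageCell)%type.

(* number of entries (r+s+1)n + m binom(n,2); entries are 0..N-1 instead of 1..N *)
Definition Nent := (rtot + stot + 1) * n + m * 'C(n, 2).

Definition is_SB (f : {ffun Cell -> 'I_Nent}) : bool :=
  [&& injectiveb f,
      [forall v : 'I_Nent, exists c : Cell, f c == v] &
      [forall pc : PageCell,
        let: (i, row, col) := val pc in
        [forall j : 'I_n,
            ((nat_of_ord row == j.+1 + rv i) ==> (f (inl j) < f (inr pc))) &&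
            ((nat_of_ord col == j.+1) ==> (f (inr pc) < f (inl j)))]]].

Definition SBminus : {set {ffun Cell -> 'I_Nent}} := [set f | is_SB f].
End SBdef.

(* Main.v *)
Require Import Defs.
From mathcomp Require Import all_boot zify.
Set Implicit Arguments. Unset Strict Implicit. Unset Printing Implicit Defensive.

Lemma card_bij_ex (A B : finType) : #|A| = #|B| -> exists f : A -> B, bijective f.
Proof.
move=> e. exists (fun a => enum_val (cast_ord e (enum_rank a))).
apply: inj_card_bij; last by rewrite e.
move=> x y /enum_val_inj /cast_ord_inj /enum_rank_inj //.
Qed.

Lemma card_tag_ord m (r : 'I_m -> nat) : #|{: {t : 'I_m & 'I_(r t)}}| = \sum_(i < m) r i.
Proof.
rewrite card_tagged sumnE big_map big_enum /=. by apply: eq_bigr => i _; rewrite card_ord.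
Qed.

Lemma card_pairs n : #|{: pairs n}| = 'C(n, 2).
Proof.
rewrite card_sig -bin2_sum big_mkord -sum1_card.
have -> : \sum_(x : 'I_n * 'I_n | x.1 < x.2) 1 = \sum_(i < n) \sum_(j < n | i < j) 1.
  by rewrite pair_big_dep.
rewrite (exchange_big_dep xpredT) //=.
apply: eq_bigr => j _.
have := big_ord_widen_cond n (fun i : nat => true) (fun _ => 1) (ltnW (ltn_ord j)).
rewrite /= => <-. by rewrite sum1_card card_ord.
Qed.

Section Main.
Variables (n m : nat) (r s : 'I_m -> nat).
Hypothesis npos : 0 < n.
Local Notation R := (\sum_(i < m) r i).
Local Notation S := (\sum_(i < m) s i).
Local Notation B := (Bnd n r s).
Local Notation L := (Letter n R S m).
Local Notation C := (Cell n r s).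
Local Notation PC := (PageCell n r s).
Variable er : 'I_R -> {t : 'I_m & 'I_(r t)}.
Variable es : 'I_S -> {t : 'I_m & 'I_(s t)}.
Variable er_inv : {t : 'I_m & 'I_(r t)} -> 'I_R.
Variable es_inv : {t : 'I_m & 'I_(s t)} -> 'I_S.
Hypothesis erK : cancel er er_inv.
Hypothesis erK' : cancel er_inv er.
Hypothesis esK : cancel es es_inv.
Hypothesis esK' : cancel es_inv es.
Let er_inj : injective er := can_inj erK.
Let es_inj : injective es := can_inj esK.

Definition i0 : 'I_n := Ordinal npos.
Lemma Bnd_pos : 0 < B. Proof. by rewrite /Bnd addn1. Qed.
Definition ordB x : 'I_B := insubd (Ordinal Bnd_pos) x.
Lemma ordBE x : x < B -> ordB x = x :> nat.
Proof. by move=> h; rewrite val_insubd h. Qed.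

Definition mkcell (t : 'I_m) (row col : nat) : C :=
  match (insub (t, ordB row, ordB col) : option PC) with
  | Some pc => inr pc | None => inl i0 end.

Lemma mkcellP t row col : row < B -> col < B ->
  in_stair n (r t) (s t) row col && ~~ is_diag n (r t) row col ->
  exists pc : PC, mkcell t row col = inr pc /\ (val pc).1.1 = t /\
     (val pc).1.2 = row :> nat /\ (val pc).2 = col :> nat.
Proof.
move=> hr hc ok.
have ok' : page_ok (t, ordB row, ordB col) by rewrite /page_ok /= !ordBE.
rewrite /mkcell insubT /=.
by eexists; split; first reflexivity; rewrite /= !ordBE.
Qed.

Lemma r_le t : r t <= R. Proof. by rewrite (bigD1 t) //= leq_addr. Qed.
Lemma s_le t : s t <= S. Proof. by rewrite (bigD1 t) //= leq_addr. Qed.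

Definition psi (l : L) : C :=
  match l with
  | inl (inl i) => inl i
  | inl (inr (p, k)) => mkcell k ((val p).1 + 1 + r k) ((val p).2 + 1)
  | inr (inl (i, k)) => mkcell (tag (er k)) (tagged (er k) + 1) (i + 1)
  | inr (inr (i, k)) => mkcell (tag (es k)) (i + 1 + r (tag (es k))) (n + tagged (es k) + 1)
  end.

Lemma psi_a (p : pairs n) (k : 'I_m) : exists pc : PC, psi (la R S p k) = inr pc /\
  (val pc).1.1 = k /\ (val pc).1.2 = (val p).1 + 1 + r k :> nat /\ (val pc).2 = (val p).2 + 1 :> nat.
Proof.
apply: mkcellP; rewrite /Bnd /rtot /stot; have := r_le k; case: p => [[i j]] /= h; have := ltn_ord i; have := ltn_ord j; try lia.
rewrite /in_stair /is_diag. lia.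
Qed.

Lemma psi_b (i : 'I_n) (k : 'I_R) : exists pc : PC, psi (lb S m i k) = inr pc /\
  (val pc).1.1 = tag (er k) /\ (val pc).1.2 = tagged (er k) + 1 :> nat /\ (val pc).2 = i + 1 :> nat.
Proof.
rewrite /psi /lb /=.
have hu : tagged (er k) < r (tag (er k)) := ltn_ord _.
move: (nat_of_ord (tagged (er k))) hu => u hu; move: (tag (er k)) hu => t hu.
apply: mkcellP; rewrite /Bnd /rtot /stot; have := r_le t; have := ltn_ord i; try lia.
rewrite /in_stair /is_diag. lia.
Qed.

Lemma psi_c (i : 'I_n) (k : 'I_S) : exists pc : PC, psi (lc R m i k) = inr pc /\
  (val pc).1.1 = tag (es k) /\ (val pc).1.2 = i + 1 + r (tag (es k)) :> nat /\ (val pc).2 = n + tagged (es k) + 1 :> nat.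
Proof.
rewrite /psi /lc /=.
have hu : tagged (es k) < s (tag (es k)) := ltn_ord _.
move: (nat_of_ord (tagged (es k))) hu => u hu; move: (tag (es k)) hu => t hu.
apply: mkcellP; rewrite /Bnd /rtot /stot; have := r_le t; have := s_le t; have := ltn_ord i; try lia.
rewrite /in_stair /is_diag. lia.
Qed.


Lemma psi_inl l i : psi l = inl i -> l = lx R S m i.
Proof.
case: l => [[j|[p k]]|[[j k]|[j k]]].
- by move=> [->].
- by have [pc [e _]] := psi_a p k; rewrite /la in e; rewrite e.
- by have [pc [e _]] := psi_b j k; rewrite /lb in e; rewrite e.
- by have [pc [e _]] := psi_c j k; rewrite /lc in e; rewrite e.
Qed.

Lemma psi_inr l (pc : PC) : psi l = inr pc ->
  [\/ exists p k, l = la R S p k /\ (val pc).1.1 = k /\ (val pc).1.2 = (val p).1 + 1 + r k :> nat /\ (val pc).2 = (val p).2 + 1 :> nat,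
       exists i k, l = lb S m i k /\ (val pc).1.1 = tag (er k) /\ (val pc).1.2 = tagged (er k) + 1 :> nat /\ (val pc).2 = i + 1 :> nat |
       exists i k, l = lc R m i k /\ (val pc).1.1 = tag (es k) /\ (val pc).1.2 = i + 1 + r (tag (es k)) :> nat /\ (val pc).2 = n + tagged (es k) + 1 :> nat].
Proof.
case: l => [[j|[p k]]|[[j k]|[j k]]].
- by [].
- have [pc' [e h]] := psi_a p k; rewrite /la in e; rewrite e => -[<-].
  by apply: Or31; exists p, k.
- have [pc' [e h]] := psi_b j k; rewrite /lb in e; rewrite e => -[<-].
  by apply: Or32; exists j, k.
- have [pc' [e h]] := psi_c j k; rewrite /lc in e; rewrite e => -[<-].
  by apply: Or33; exists j, k.
Qed.

Lemma tag_eqr (x y : {t : 'I_m & 'I_(r t)}) : tag x = tag y -> tagged x = tagged y :> nat -> x = y.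
Proof. by case: x => t u; case: y => t' u' /= e; subst t' => /val_inj ->. Qed.
Lemma tag_eqs (x y : {t : 'I_m & 'I_(s t)}) : tag x = tag y -> tagged x = tagged y :> nat -> x = y.
Proof. by case: x => t u; case: y => t' u' /= e; subst t' => /val_inj ->. Qed.

Lemma psi_inj : injective psi.
Proof.
move=> l1 l2 E.
case E1: (psi l1) => [i|pc].
  by rewrite (psi_inl E1) (@psi_inl l2 i) // -E.
have E2 : psi l2 = inr pc by rewrite -E.
have lt1 : forall k : 'I_R, tagged (er k) < r (tag (er k)) by move=> k; exact: ltn_ord.
case/psi_inr: E1 => [[p1 [k1 [-> [a1 [b1 c1]]]]]|[i1 [k1 [-> [a1 [b1 c1]]]]]|[i1 [k1 [-> [a1 [b1 c1]]]]]];
case/psi_inr: E2 => [[p2 [k2 [-> [a2 [b2 c2]]]]]|[i2 [k2 [-> [a2 [b2 c2]]]]]|[i2 [k2 [-> [a2 [b2 c2]]]]]].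
- have ek : k1 = k2 by rewrite -a1 -a2.
  rewrite -ek in a2 b2 *; have e1 : (val p1).1 = (val p2).1 :> nat by lia.
  have e2 : (val p1).2 = (val p2).2 :> nat by lia.
  congr la; apply: val_inj; case: (val p1) e1 e2 => x1 y1; case: (val p2) => x2 y2 /= /val_inj -> /val_inj -> //.
- have h : (val pc).1.2 <= r (val pc).1.1 by rewrite b2 a2 addn1; exact: lt1.
  rewrite a1 b1 in h; exfalso; lia.
- have ? := ltn_ord (val p1).2; exfalso; lia.
- have h : (val pc).1.2 <= r (val pc).1.1 by rewrite b1 a1 addn1; exact: lt1.
  rewrite a2 b2 in h; exfalso; lia.
- have ei : i1 = i2 by apply: ord_inj; lia.
  subst i2; congr lb; apply: er_inj; apply: tag_eqr; first by rewrite -a1 -a2.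
  lia.
- have ? := ltn_ord i1; exfalso; lia.
- have ? := ltn_ord (val p2).2; exfalso; lia.
- have ? := ltn_ord i2; exfalso; lia.
- have ea : tag (es k1) = tag (es k2) by rewrite -a1 -a2.
  have ei : i1 = i2 by apply: ord_inj; move: b1 b2; rewrite ea; lia.
  subst i2; congr lc; apply: es_inj; apply: tag_eqs => //.
  lia.
Qed.


Lemma pc_eq (pc pc' : PC) : (val pc).1.1 = (val pc').1.1 -> (val pc).1.2 = (val pc').1.2 :> nat ->
  (val pc).2 = (val pc').2 :> nat -> pc = pc'.
Proof.
move=> e1 e2 e3; apply: val_inj; move: e1 e2 e3; case: (val pc) => [[a b] c]; case: (val pc') => [[a' b'] c'] /=.
by move=> -> /ord_inj -> /ord_inj ->.
Qed.

Lemma psi_surj (c : C) : exists l, psi l = c.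
Proof.
case: c => [i|pc]; first by exists (lx R S m i).
have ok := valP pc.
move: ok; rewrite /page_ok /in_stair /is_diag.
set t := (val pc).1.1.
set row := nat_of_ord (val pc).1.2.
set col := nat_of_ord (val pc).2.
move=> ok.
case: (leqP row (r t)) => hr.
- have hi : col - 1 < n by lia.
  have hu : row - 1 < r t by lia.
  exists (lb S m (Ordinal hi) (er_inv (existT _ t (Ordinal hu)))).
  have [pc' [-> [a [b c]]]] := psi_b (Ordinal hi) (er_inv (existT _ t (Ordinal hu))).
  rewrite erK' /= in a b; congr inr; symmetry; apply: pc_eq.
  + by rewrite a.
  + rewrite b; rewrite -/row; lia.
  + rewrite c /= -/col; lia.
case: (leqP col n) => hc.
- have hlt : (row - r t - 1) < (col - 1) by lia.
  have hi : row - r t - 1 < n by lia.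
  have hj : col - 1 < n by lia.
  pose p : pairs n := exist _ (Ordinal hi, Ordinal hj) hlt.
  exists (la R S p t).
  have [pc' [-> [a [b c]]]] := psi_a p t.
  congr inr; symmetry; apply: pc_eq.
  + by rewrite a.
  + rewrite b /= -/row; lia.
  + rewrite c /= -/col; lia.
- have hi : row - r t - 1 < n by lia.
  have hu : col - n - 1 < s t by lia.
  exists (lc R m (Ordinal hi) (es_inv (existT _ t (Ordinal hu)))).
  have [pc' [-> [a [b c]]]] := psi_c (Ordinal hi) (es_inv (existT _ t (Ordinal hu))).
  rewrite esK' /= in a b c; congr inr; symmetry; apply: pc_eq.
  + by rewrite a.
  + rewrite b /= -/row; lia.
  + rewrite c /= -/col; lia.
Qed.

Lemma SB_row (f : {ffun C -> 'I_(Nent n r s)}) (pc : PC) (j : 'I_n) : is_SB f ->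
  (val pc).1.2 = j.+1 + r (val pc).1.1 :> nat -> f (inl j) < f (inr pc).
Proof.
move=> /and3P[_ _ /forallP/(_ pc)]; case: pc => [[[t row] col] ok] /= /forallP/(_ j)/andP[h1 h2] e.
by apply: (implyP h1); apply/eqP.
Qed.

Lemma SB_col (f : {ffun C -> 'I_(Nent n r s)}) (pc : PC) (j : 'I_n) : is_SB f ->
  (val pc).2 = j.+1 :> nat -> f (inr pc) < f (inl j).
Proof.
move=> /and3P[_ _ /forallP/(_ pc)]; case: pc => [[[t row] col] ok] /= /forallP/(_ j)/andP[h1 h2] e.
by apply: (implyP h2); apply/eqP.
Qed.

Section SPfacts.
Variable pos : {ffun L -> 'I_#|L|}.
Hypothesis hp : is_SP pos.
Lemma SP_inj : injective pos. Proof. by case/and5P: hp => /injectiveP. Qed.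
Lemma SP_x (i j : 'I_n) : i < j -> pos (lx R S m i) < pos (lx R S m j).
Proof. by case/and5P: hp => _ /forallP/(_ i)/forallP/(_ j)/implyP. Qed.
Lemma SP_a1 p k : pos (lx R S m (val p).1) < pos (la R S p k).
Proof. by case/and5P: hp => _ _ /forallP/(_ p)/forallP/(_ k)/andP[]. Qed.
Lemma SP_a2 p k : pos (la R S p k) < pos (lx R S m (val p).2).
Proof. by case/and5P: hp => _ _ /forallP/(_ p)/forallP/(_ k)/andP[]. Qed.
Lemma SP_b i k : pos (lb S m i k) < pos (lx R S m i).
Proof. by case/and5P: hp => _ _ _ /forallP/(_ i)/forallP/(_ k). Qed.
Lemma SP_c i k : pos (lx R S m i) < pos (lc R m i k).
Proof. by case/and5P: hp => _ _ _ _ /forallP/(_ i)/forallP/(_ k). Qed.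
End SPfacts.

Hypothesis mpos : 0 < m.

Lemma main_eq (eL : #|L| = Nent n r s) : #|SBminus n r s| = #|SP n R S m|.
Proof.
have hc : forall c, c \in codom psi by move=> c; have [l <-] := psi_surj c; exact: codom_f.
pose phi c := iinv (hc c).
have phiK : cancel psi phi by move=> l; rewrite /phi iinv_f //; exact: psi_inj.
have phiK' : cancel phi psi by move=> c; rewrite /phi f_iinv.
pose A (pos : {ffun L -> 'I_#|L|}) : {ffun C -> 'I_(Nent n r s)} := [ffun c => cast_ord eL (pos (phi c))].
have Ainj : injective A.
  move=> p1 p2 e; apply/ffunP => l; have := congr1 (fun g : {ffun C -> 'I_(Nent n r s)} => g (psi l)) e.
  by rewrite /A !ffunE phiK => /cast_ord_inj.
have -> : SBminus n r s = A @: SP n R S m.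
  apply/setP => f; rewrite inE; apply/idP/imsetP.
  - move=> hf; pose pos : {ffun L -> 'I_#|L|} := [ffun l => cast_ord (esym eL) (f (psi l))].
    exists pos.
    + have finj : injective f by case/and3P: hf => /injectiveP.
      rewrite inE; apply/and5P; split.
      * apply/injectiveP => l1 l2; rewrite !ffunE => /cast_ord_inj/finj; exact: psi_inj.
      * apply/forallP => i; apply/forallP => j; apply/implyP => hij.
        pose p : pairs n := exist _ (i, j) hij.
        have [pc [e [a [b c]]]] := psi_a p (Ordinal mpos).
        rewrite !ffunE /=.
        apply: (@ltn_trans (f (inr pc))).
          by apply: SB_row => //; rewrite b a /=; lia.
        by apply: SB_col => //; rewrite c /=; lia.
      * apply/forallP => p; apply/forallP => k.
        have [pc [e [a [b c]]]] := psi_a p k.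
        rewrite !ffunE e /=; apply/andP; split.
          by apply: SB_row => //; rewrite b a addn1.
        by apply: SB_col => //; rewrite c addn1.
      * apply/forallP => i; apply/forallP => k.
        have [pc [e [a [b c]]]] := psi_b i k.
        rewrite !ffunE e /=; apply: SB_col => //; rewrite c; lia.
      * apply/forallP => i; apply/forallP => k.
        have [pc [e [a [b c]]]] := psi_c i k.
        rewrite !ffunE e /=; apply: SB_row => //; rewrite b a; lia.
    + apply/ffunP => c; rewrite /A !ffunE phiK'; apply: ord_inj; by [].
  - move=> [pos]; rewrite inE => hp ->.
    apply/and3P; split.
    + apply/injectiveP => c1 c2; rewrite !ffunE => /cast_ord_inj/(SP_inj hp)/(can_inj phiK') //.
    + apply/forallP => v.
      have hcard : #|'I_#|L| | <= #|L| by rewrite card_ord.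
      have /codomP [l hl] := inj_card_onto (SP_inj hp) hcard (cast_ord (esym eL) v).
      apply/existsP; exists (psi l); rewrite ffunE phiK -hl; apply/eqP; apply: ord_inj; by [].
    + apply/forallP => -[[[t row] col] ok] /=; apply/forallP => j; apply/andP; split; apply/implyP => /eqP e.
      * rewrite !ffunE /=.
        set pc : PC := exist _ (t, row, col) ok.
        have phx : phi (inl j) = lx R S m j := phiK (lx R S m j).
        rewrite phx.
        have := phiK' (inr pc); move: (phi (inr pc)) => l hl.
        case/psi_inr: hl => [[p [k [-> [a [b c]]]]]|[i [k [-> [a [b c]]]]]|[i [k [-> [a [b c]]]]]] /=.
        - move: a b c; rewrite /pc /= => a b c; subst k.
          have ej : (val p).1 = j by apply: ord_inj => /=; lia.
          rewrite -ej; exact: SP_a1.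
        - exfalso; move: a b c; rewrite /pc /= => a b c.
          have hlt : row <= r t by rewrite b a addn1; exact: ltn_ord.
          lia.
        - move: a b c; rewrite /pc /= => a b c.
          have ej : i = j by apply: ord_inj; move: b; rewrite -a; lia.
          rewrite -ej; exact: SP_c.
      * rewrite !ffunE /=.
        set pc : PC := exist _ (t, row, col) ok.
        have phx : phi (inl j) = lx R S m j := phiK (lx R S m j).
        rewrite phx.
        have := phiK' (inr pc); move: (phi (inr pc)) => l hl.
        case/psi_inr: hl => [[p [k [-> [a [b c]]]]]|[i [k [-> [a [b c]]]]]|[i [k [-> [a [b c]]]]]] /=.
        - move: a b c; rewrite /pc /= => a b c.
          have ej : (val p).2 = j by apply: ord_inj => /=; lia.
          rewrite -ej; exact: SP_a2.
        - move: a b c; rewrite /pc /= => a b c.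
          have ej : i = j by apply: ord_inj; lia.
          rewrite -ej; exact: SP_b.
        - move: a b c; rewrite /pc /= => a b c.
          exfalso; have := ltn_ord j; lia.
  by rewrite card_in_imset //; move=> x y _ _; exact: Ainj.
Qed.
End Main.

Theorem proposition4p2 (n m : nat) (r s : 'I_m -> nat) :
  0 < n -> 0 < m ->
  #|SBminus n r s| = #|SP n (\sum_(i < m) r i) (\sum_(i < m) s i) m|.
Proof.
move=> npos mpos.
have [er [er_inv erK erK']] : exists f : 'I_(\sum_(i < m) r i) -> {t : 'I_m & 'I_(r t)}, bijective f.
  by apply: card_bij_ex; rewrite card_ord card_tag_ord.
have [es [es_inv esK esK']] : exists f : 'I_(\sum_(i < m) s i) -> {t : 'I_m & 'I_(s t)}, bijective f.
  by apply: card_bij_ex; rewrite card_ord card_tag_ord.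
apply: (main_eq npos erK erK' esK esK' mpos).
rewrite /Letter !card_sum !card_prod !card_ord card_pairs /Nent /rtot /stot.
nia.
Qed.
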